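(* Let $M$ be a module over a commutative ring $A$, and let $A\oplus M$ be the idealization of $M$. Then $\mathfrak{C}(A,A\oplus M)=0$, where $A$ is regarded as a subring of $A\oplus M$ via $a\mapsto(a,0)$.
   Context: The idealization $A\oplus M$ is the ring with underlying group $A\oplus M$ and multiplication $(a,m)(a',m')=(aa',am'+a'm)$. For an extension of rings $A\subseteq B$ and $A$-submodules $L,L'$ of $B$, $LL'$ is the $A$-submodule of finite sums $\sum x_ky_k$. An $A$-submodule $L$ of $B$ is an invertible ideal of $A\subseteq B$ if $LL'=A$ for some $A$-submodule $L'$ of $B$; these form an abelian group $\mathscr{G}(A,B)$ and $\mathfrak{C}(A,B)=\mathscr{G}(A,B)/\{Ax: x\in B^\ast\}$. *)

(* Defs.v *)
From HB Require Import structures.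
From mathcomp Require Import all_boot all_order all_algebra.
Set Implicit Arguments. Unset Strict Implicit. Unset Printing Implicit Defensive.
Import GRing.Theory.
Local Open Scope ring_scope.

(* The idealization A (+) M, with underlying additive group A * M
   (componentwise zmodType structure on pairs) and multiplication
   (a,m)(a',m') = (a a', a m' + a' m). *)
Section Idealization.
Variables (A : comPzRingType) (M : lmodType A).

Definition idz_mul (x y : A * M) : A * M :=
  (x.1 * y.1, x.1 *: y.2 + y.1 *: x.2).

Definition idz_one : A * M := (1, 0).

Definition idz_incl (a : A) : A * M := (a, 0).

Definition is_Asubmod (L : A * M -> Prop) : Prop :=
  [/\ L 0,
      (forall x y, L x -> L y -> L (x + y)) &
      (forall (a : A) x, L x -> L (idz_mul (idz_incl a) x))].

Definition mod_prod (L L' : A * M -> Prop) (z : A * M) : Prop :=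
  exists s : seq ((A * M) * (A * M)),
    (forall p, p \in s -> L p.1 /\ L' p.2) /\
    z = \sum_(p <- s) idz_mul p.1 p.2.

Definition base_sub (z : A * M) : Prop := exists a : A, z = idz_incl a.

Definition invertible_ideal (L : A * M -> Prop) : Prop :=
  is_Asubmod L /\
  exists L' : A * M -> Prop, is_Asubmod L' /\
    forall z, mod_prod L L' z <-> base_sub z.

Definition idz_unit (x : A * M) : Prop := exists y, idz_mul x y = idz_one.

Definition principal_sub (x : A * M) (z : A * M) : Prop :=
  exists a : A, z = idz_mul (idz_incl a) x.

Definition trivial_class_group : Prop :=
  forall L : A * M -> Prop, invertible_ideal L ->
    exists x : A * M, idz_unit x /\ forall z, L z <-> principal_sub x z.

End Idealization.

(* Main.v *)
Require Import Defs.
From mathcomp Require Import all_boot all_order all_algebra.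
Import GRing.Theory.
Local Open Scope ring_scope.

Section H.
Variables (A : comPzRingType) (M : lmodType A).
Lemma sum_fst T (s : seq T) (F : T -> A * M) :
  (\sum_(p <- s) F p).1 = \sum_(p <- s) (F p).1.
Proof. by elim: s => [|p s IH]; rewrite ?big_nil ?big_cons //= IH. Qed.
Lemma sum_snd T (s : seq T) (F : T -> A * M) :
  (\sum_(p <- s) F p).2 = \sum_(p <- s) (F p).2.
Proof. by elim: s => [|p s IH]; rewrite ?big_nil ?big_cons //= IH. Qed.
Lemma pair_ext (x y : A * M) : x.1 = y.1 -> x.2 = y.2 -> x = y.
Proof. by case: x; case: y => ? ? ? ? /= -> ->. Qed.
End H.

Theorem corollary5p12 (A : comPzRingType) (M : lmodType A) :
  trivial_class_group M.
Proof.
move=> L [[L0 Ladd Lsc] [L' [[L'0 L'add L'sc] HLL']]].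
have [s [Hs Hsum]] : mod_prod L L' (1, 0).
  by apply/HLL'; exists 1.
have H1 : \sum_(p <- s) p.1.1 * p.2.1 = 1.
  by have := congr1 fst Hsum; rewrite sum_fst /=.
have H2 : \sum_(p <- s) (p.1.1 *: p.2.2 + p.2.1 *: p.1.2) = 0 :> M.
  by have := congr1 snd Hsum; rewrite sum_snd /=.
set sm := \sum_(p <- s) p.2.1 *: p.1.2.
have Hsm : sm = - \sum_(p <- s) p.1.1 *: p.2.2.
  apply/eqP; rewrite -addr_eq0 /sm -big_split /=.
  rewrite -[X in _ == X]H2; apply/eqP; apply: eq_bigr => p _; by rewrite addrC.
exists (1, sm); split.
  by exists (1, - sm); rewrite /idz_mul /idz_one /= mul1r !scale1r addNr.
case=> a m; split.
- move=> Lz; exists a.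
  have Hp : forall p, p \in s -> a *: p.2.2 + p.2.1 *: m = 0.
    move=> p ps; have [_ L'p] := Hs p ps.
    have : base_sub (idz_mul (a, m) p.2).
      apply/HLL'; exists [:: ((a, m), p.2)]; split.
        by move=> q; rewrite inE => /eqP ->.
      by rewrite big_cons big_nil addr0.
    by case=> c; rewrite /idz_mul /idz_incl => -[_ ->].
  rewrite /idz_mul /idz_incl /= mulr1 scaler0 addr0; congr (_, _).
  rewrite Hsm scalerN -[LHS]scale1r -H1 scaler_suml scaler_sumr -sumrN.
  rewrite big_seq_cond [RHS]big_seq_cond; apply: eq_bigr => p /andP[ps _].
  have := Hp p ps; move/eqP; rewrite addr_eq0 => /eqP E.
  by rewrite (scalerA a) (mulrC a) -(scalerA _ a) E scalerN opprK scalerA.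
- case=> c ->; apply: (Lsc).
  have -> : ((1, sm) : A * M) = \sum_(p <- s) idz_mul (idz_incl M p.2.1) p.1.
    apply: pair_ext.
      rewrite sum_fst -H1; apply: eq_bigr => p _ /=; by rewrite mulrC.
    rewrite sum_snd /sm; apply: eq_bigr => p _ /=; by rewrite scaler0 addr0.
  elim: s Hs {H1 H2 Hsum sm Hsm} => [|p s IH] Hs; first by rewrite big_nil.
  rewrite big_cons; apply: Ladd.
    by apply: (Lsc); case: (Hs p (mem_head _ _)).
  by apply: IH => q qs; apply: Hs; rewrite inE qs orbT.
Qed.
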